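(* Let $C=[\sigma,\alpha,\phi]$ be a $3$-constellation with $\alpha$ a fixed-point-free involution and $\sigma=\sigma_1\sigma_2\cdots\sigma_r$ its decomposition into disjoint cycles. Let $A=kQ/I$ be the surface algebra of $C$ over a field $k$, with vertex span $A_0=k^{Q_0}$, and let $\Lambda$ be its completion with respect to the arrow ideal. Then (1) $\mathcal{Z}(\Lambda)\cong A_0\cdot k[[z_1,z_2,\dots,z_r]]/(z_iz_j)_{i\neq j}$, and (2) $\mathcal{N}(\Lambda)\cong\prod_{i=1}^r\overline{k\tilde{\mathbb{A}}^{eq}_{|\sigma_i|}}$, where $\overline{k\tilde{\mathbb{A}}^{eq}_{n}}$ denotes the completion (with respect to the arrow ideal) of the path algebra of the cyclically oriented quiver $\tilde{\mathbb{A}}^{eq}_n$ with $n$ vertices $x_1,\dots,x_n$ and arrows $x_1\to x_2\to\cdots\to x_n\to x_1$.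
   Context: A $3$-constellation is a triple $[\sigma,\alpha,\phi]$ of permutations of $\{1,\dots,2m\}$ generating a transitive group with $\sigma\alpha\phi=\mathrm{id}$; with $\alpha$ a fixed-point-free involution it describes a cellularly embedded graph whose half-edges are $1,\dots,2m$, vertices are the cycles of $\sigma$, edges the $2$-cycles of $\alpha$, faces the cycles of $\phi$. The medial quiver $Q$ has a vertex for each edge and, for each half-edge $h$, an arrow $a_h$ from the vertex of the edge containing $h$ to that of the edge containing $\phi(h)$. The surface algebra is $A=kQ/I$ with $I$ generated by the paths $a_{\phi(h)}a_h$; its nonzero simple cycles correspond to the cycles $\sigma_i$ of $\sigma$, the cycle for $\sigma_i$ having length $|\sigma_i|$. $\mathcal{Z}(\Lambda)$ denotes the center. The normalization $\mathcal{N}(\Lambda)$ is defined as $\prod_i\Lambda_i$ where $\Lambda_i\subset\mathrm{Mat}_{|\sigma_i|}(k[[x_i]])$ is the hereditary order with entries in $k[[x_i]]$ on and below the diagonal and in $(x_i)$ above the diagonal. *)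

(* Defs.v *)
From HB Require Import structures.
From mathcomp Require Import all_boot all_order all_algebra all_fingroup.
Set Implicit Arguments.
Unset Strict Implicit.
Unset Printing Implicit Defensive.
Import GRing.Theory.
Local Open Scope ring_scope.

Section KAlg.
Variable k : fieldType.

Record kalg := KAlg {
  kcar :> Type;
  kadd : kcar -> kcar -> kcar;
  kmul : kcar -> kcar -> kcar;
  kone : kcar;
  kzero : kcar;
  kscale : k -> kcar -> kcar }.

Definition kalg_hom (A B : kalg) (f : A -> B) : Prop :=
  [/\ forall x y, f (kadd x y) = kadd (f x) (f y),
      forall x y, f (kmul x y) = kmul (f x) (f y),
      f (kone A) = kone B &
      forall c x, f (kscale c x) = kscale c (f x)].

Definition kalg_iso (A B : kalg) (f : A -> B) : Prop :=
  bijective f /\ kalg_hom f.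

Definition kalg_isomorphic (A B : kalg) : Prop := exists f : A -> B, kalg_iso f.

Definition central (A : kalg) (z : A) : Prop := forall y, kmul z y = kmul y z.

Definition prod_kalg (I : Type) (A : I -> kalg) : kalg :=
  @KAlg (forall i, A i)
    (fun x y i => kadd (x i) (y i))
    (fun x y i => kmul (x i) (y i))
    (fun i => kone (A i))
    (fun i => kzero (A i))
    (fun c x i => kscale c (x i)).

Definition supp (X : Type) (P : X -> bool) :=
  {f : X -> k | forall x, ~~ P x -> f x = 0}.

Definition trunc (X : Type) (P : X -> bool) (f : X -> k) : X -> k :=
  fun x => if P x then f x else 0.

Lemma trunc_ok (X : Type) (P : X -> bool) (f : X -> k) x :
  ~~ P x -> trunc P f x = 0.
Proof. by rewrite /trunc => /negbTE ->. Qed.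

Definition mkS (X : Type) (P : X -> bool) (f : X -> k) : supp P :=
  exist _ (trunc P f) (@trunc_ok X P f).

Definition supp_kalg (X : Type) (P : X -> bool)
    (mul : (X -> k) -> (X -> k) -> X -> k) (one : X -> k) : kalg :=
  @KAlg (supp P)
    (fun a b => mkS P (fun x => sval a x + sval b x))
    (fun a b => mkS P (mul (sval a) (sval b)))
    (mkS P one)
    (mkS P (fun _ => 0))
    (fun c a => mkS P (fun x => c * sval a x)).

(* Completion (w.r.t. the arrow ideal) of kQ/I for a finite quiver Q with
   I generated by paths of length 2 (monomial relations).  An element is a
   formal (possibly infinite) k-linear combination of the nonzero paths;
   a path (v, [:: a1; ...; an]) starts at v and traverses a1 first.
   Products of paths are written right-to-left: q * r = "r then q". *)
Section Quiver.
Variables (Q0 Q1 : finType) (src tgt : Q1 -> Q0).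
(* rel a b : the composite "a then b" (i.e. b a) lies in I *)
Variable rel : Q1 -> Q1 -> bool.

Definition qpath := (Q0 * seq Q1)%type.
Definition qstep (a b : Q1) : bool := (tgt a == src b) && ~~ rel a b.
Definition qvalid (p : qpath) : bool :=
  let: (v, s) := p in
  if s is a :: s' then (src a == v) && path qstep a s' else true.
Definition qend (v : Q0) (s : seq Q1) : Q0 := last v (map tgt s).
Definition qmul (f g : qpath -> k) (p : qpath) : k :=
  let: (v, s) := p in
  \sum_(j < (size s).+1) f (qend v (take j s), drop j s) * g (v, take j s).
Definition qone (p : qpath) : k := if p.2 is [::] then 1 else 0.

Definition completed_path_alg : kalg := supp_kalg qvalid qmul qone.
End Quiver.

Section Surface.
Variables (n : nat) (alpha phi : {perm 'I_n}).

Definition edges : {set {set 'I_n}} := [set [set h; alpha h] | h : 'I_n].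
Lemma edge_in (h : 'I_n) : [set h; alpha h] \in edges.
Proof. by apply/imsetP; exists h. Qed.
Definition sq0 := {e : {set 'I_n} | e \in edges}.
Definition edge_of (h : 'I_n) : sq0 := exist _ [set h; alpha h] (edge_in h).

(* arrow a_h : edge(h) -> edge(phi h); relations a_{phi h} a_h *)
Definition surface_completion : kalg :=
  @completed_path_alg sq0 'I_n
    (fun h => edge_of h) (fun h => edge_of (phi h)) (fun a b => b == phi a).
End Surface.

Section Series.
Variable r : nat.
Definition mono := {ffun 'I_r -> nat}.
Definition smul (f g : mono -> k) (mu : mono) : k :=
  \sum_(x : {ffun 'I_r -> 'I_(\sum_i mu i).+1} | [forall i, (x i <= mu i)%N])
     f [ffun i => nat_of_ord (x i)] * g [ffun i => (mu i - x i)%N].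
Definition sone (mu : mono) : k := if mu == [ffun => 0%N] then 1 else 0.
Definition series_alg : kalg := supp_kalg (fun _ : mono => true) smul sone.
Definition zvar (i : 'I_r) : series_alg :=
  mkS (fun _ : mono => true)
    (fun mu => if mu == [ffun j => nat_of_bool (j == i)] then 1 else 0).
Definition in_zz_ideal (x : series_alg) : Prop :=
  exists F : 'I_r -> 'I_r -> series_alg,
    x = \big[@kadd series_alg / kzero series_alg]_(i : 'I_r)
          \big[@kadd series_alg / kzero series_alg]_(j : 'I_r | i != j)
             kmul (F i j) (kmul (zvar i) (zvar j)).
End Series.

(* Hereditary order in Mat_n(k[[x]]): entry (i,j) coefficient of x^l;
   entries above the diagonal (i < j) lie in (x). *)
Section Order.
Variable n : nat.
Definition ho_valid (x : 'I_n * 'I_n * nat) : bool :=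
  let: (i, j, l) := x in (j <= i)%N || (0 < l)%N.
Definition ho_mul (f g : 'I_n * 'I_n * nat -> k) (x : 'I_n * 'I_n * nat) : k :=
  let: (i, j, l) := x in
  \sum_(t : 'I_n) \sum_(a < l.+1) f (i, t, nat_of_ord a) * g (t, j, (l - a)%N).
Definition ho_one (x : 'I_n * 'I_n * nat) : k :=
  let: (i, j, l) := x in if (i == j) && (l == 0%N) then 1 else 0.
Definition hered_order : kalg := supp_kalg ho_valid ho_mul ho_one.

Definition cyc_alg : kalg :=
  @completed_path_alg 'I_n 'I_n id (@ordS n) (fun _ _ => false).
End Order.

(* cycles of sigma (including fixed points), enumerated *)
Definition ncyc (m : nat) (sigma : {perm 'I_m}) : nat := #|porbits sigma|.
Definition cyc_len (m : nat) (sigma : {perm 'I_m}) (i : 'I_(ncyc sigma)) : nat :=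
  #|enum_val (A := porbits sigma) i|.

Definition normalization (m : nat) (sigma : {perm 'I_m}) : kalg :=
  prod_kalg (fun i : 'I_(ncyc sigma) => hered_order (cyc_len i)).

End KAlg.

(* Main.v *)
Require Import Defs.
From HB Require Import structures.
From mathcomp Require Import all_boot all_order all_algebra all_fingroup.
From mathcomp Require Import zify.
From Stdlib Require Import FunctionalExtensionality ProofIrrelevance.
Set Implicit Arguments.
Unset Strict Implicit.
Unset Printing Implicit Defensive.
Import GRing.Theory.


Section Gen.
Variable k : fieldType.
Local Open Scope ring_scope.

Lemma supp_eq (X : Type) (P : X -> bool) (a b : supp k P) :
  (forall x, sval a x = sval b x) -> a = b.
Proof.
case: a b => [f Hf] [g Hg] /= E.
have efg : f = g by apply: functional_extensionality.
subst g; by rewrite (proof_irrelevance _ Hf Hg).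
Qed.

Lemma sval_mkS (X : Type) (P : X -> bool) (f : X -> k) x :
  sval (mkS P f) x = if P x then f x else 0.
Proof. by []. Qed.

Section SK.
Variables (X : Type) (P : X -> bool) (mul : (X -> k) -> (X -> k) -> X -> k) (one : X -> k).
Let A := supp_kalg P mul one.
Lemma skaddE (a b : A) x : sval (kadd a b) x = if P x then sval a x + sval b x else 0.
Proof. by []. Qed.
Lemma skmulE (a b : A) x : sval (kmul a b) x = if P x then mul (sval a) (sval b) x else 0.
Proof. by []. Qed.
Lemma skoneE x : sval (kone A) x = if P x then one x else 0.
Proof. by []. Qed.
Lemma skzeroE x : sval (kzero A) x = 0.
Proof. by rewrite /= /trunc; case: (P x). Qed.
Lemma skscaleE c (a : A) x : sval (kscale c a) x = if P x then c * sval a x else 0.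
Proof. by []. Qed.
End SK.

Lemma supp_out (X : Type) (P : X -> bool) (a : supp k P) x : ~~ P x -> sval a x = 0.
Proof. exact: (proj2_sig a). Qed.

Lemma sum_inj (I J : finType) (h : J -> I) (G : I -> k) :
  injective h -> (forall i, (forall j, h j != i) -> G i = 0) ->
  \sum_i G i = \sum_j G (h j).
Proof.
move=> hinj H0.
rewrite (bigID (fun i => i \in codom h)) /= [X in _ + X]big1 ?addr0; last first.
  move=> i Hn; apply: H0 => j; apply/eqP => E; move/negP: Hn; apply.
  by apply/codomP; exists j.
rewrite -(big_imset G (in2W hinj)) /=; apply: eq_bigl => i.
apply/codomP/imsetP => [[j ->]|[j _ ->]]; by exists j.
Qed.

Lemma hom_inv (A B : kalg k) (f : A -> B) (g : B -> A) :
  cancel f g -> cancel g f -> kalg_hom f -> kalg_hom g.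
Proof.
move=> fK gK [Ha Hm H1 Hs]; split.
- by move=> x y; apply: (can_inj fK); rewrite gK Ha !gK.
- by move=> x y; apply: (can_inj fK); rewrite gK Hm !gK.
- by rewrite -H1 fK.
- by move=> c x; apply: (can_inj fK); rewrite gK Hs !gK.
Qed.

Lemma prod_iso (I : Type) (A B : I -> kalg k) (f : forall i, A i -> B i)
  (g : forall i, B i -> A i) :
  (forall i, cancel (f i) (g i)) -> (forall i, cancel (g i) (f i)) ->
  (forall i, kalg_hom (f i)) -> kalg_isomorphic (prod_kalg A) (prod_kalg B).
Proof.
move=> fK gK Hf; exists (fun (x : prod_kalg A) i => f i (x i)); split.
  exists (fun (y : prod_kalg B) i => g i (y i)) => x;
  by apply: functional_extensionality_dep => i; rewrite ?fK ?gK.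
split.
- by move=> x y; apply: functional_extensionality_dep => i /=; case: (Hf i).
- by move=> x y; apply: functional_extensionality_dep => i /=; case: (Hf i).
- by apply: functional_extensionality_dep => i /=; case: (Hf i).
- by move=> c x; apply: functional_extensionality_dep => i /=; case: (Hf i).
Qed.

Lemma map_traject (T : Type) (f : T -> T) x L :
  map f (traject f x L) = traject f (f x) L.
Proof. by elim: L x => //= L IH x; rewrite IH. Qed.

Lemma drop_traject (T : Type) (f : T -> T) x L q : (q <= L)%N ->
  drop q (traject f x L) = traject f (iter q f x) (L - q).
Proof.
move=> qL; rewrite -{1}(subnKC qL) trajectD drop_size_cat //.
by rewrite size_traject.
Qed.

End Gen.

Section Cyc.
Variable k : fieldType.
Variable n : nat.
Local Open Scope nat_scope.

Lemma val_iter_ordS (v : 'I_n) L : nat_of_ord (iter L (@ordS n) v) = (v + L) %% n.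
Proof.
elim: L => [|L IH] /=; first by rewrite addn0 modn_small.
by rewrite IH /= -addn1 modnDml addn1 addnS.
Qed.

Lemma divmod_lin l i : i < n -> (l * n + i) %/ n = l /\ (l * n + i) %% n = i.
Proof.
move=> Hi; have n0 : 0 < n by case: n Hi => // ? _ .
by rewrite divnMDl // divn_small // addn0 modnMDl modn_small.
Qed.

Definition cpath (v : 'I_n) L : qpath 'I_n 'I_n := (v, traject (@ordS n) v L).

Notation cvalid := (qvalid id (@ordS n) (fun _ _ => false)).

Lemma cvalid_cpath v L : cvalid (cpath v L).
Proof.
case: L => //= L; rewrite eqxx /=.
have -> : path (qstep id (ordS (n:=n)) (fun _ _ : 'I_n => false)) v
   (traject (ordS (n:=n)) (ordS v) L) = fpath (@ordS n) v (traject (ordS (n:=n)) (ordS v) L).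
  by apply: eq_path => a b; rewrite /qstep andbT.
exact: fpath_traject.
Qed.

Lemma cvalidE v s : cvalid (v, s) -> (v, s) = cpath v (size s).
Proof.
case: s => //= a s /andP[/eqP -> Hp].
have Hp' : fpath (@ordS n) v s.
  by move: Hp; apply: sub_path => x y /andP[].
by rewrite /cpath /= {1}(fpathE Hp').
Qed.

Definition Fc (f : cyc_alg k n) : hered_order k n :=
  mkS (ho_valid (n:=n)) (fun x => let: (i, j, l) := x in sval f (cpath j (l * n + i - j))).

Definition Gc (h : hered_order k n) : cyc_alg k n :=
  mkS cvalid (fun p => let: (v, s) := p in
     sval h (iter (size s) (@ordS n) v, v, (v + size s) %/ n)).

Lemma FcK : cancel Fc Gc.
Proof.
move=> f; apply: supp_eq => -[v s].
rewrite /Gc sval_mkS; case Hv: (cvalid (v, s)); last by rewrite (supp_out f) ?Hv.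
rewrite /Fc sval_mkS ifT.
  rewrite [X in _ = sval f X](cvalidE Hv); congr (sval f (cpath v _)).
  by rewrite val_iter_ordS -divn_eq addKn.
rewrite /= val_iter_ordS; case E: ((v + size s) %/ n) => [|l]; last by rewrite orbT.
by rewrite orbF; have := divn_eq (v + size s) n; rewrite E mul0n add0n => <-; rewrite leq_addr.
Qed.

Lemma GcK : cancel Gc Fc.
Proof.
move=> h; apply: supp_eq => -[[i j] l].
rewrite /Fc sval_mkS; case Hv: (ho_valid (i, j, l)); last by rewrite (supp_out h) ?Hv.
rewrite /Gc sval_mkS cvalid_cpath /= size_traject.
have Hj : j <= l * n + i.
  move: Hv => /= /orP[H|H]; first by apply: leq_trans H (leq_addl _ _).
  apply: leq_trans (ltnW (ltn_ord j)) _; apply: leq_trans (leq_addr i _).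
  by rewrite leq_pmull.
have E : j + (l * n + i - j) = l * n + i by rewrite subnKC.
have [Ed Em] := divmod_lin l (ltn_ord i).
congr (sval h (_, _, _)); last by rewrite E Ed.
by apply: val_inj; rewrite /= val_iter_ordS E Em.
Qed.




Lemma qmul_cpath (f g : qpath 'I_n 'I_n -> k) v L :
  qmul (@ordS n) f g (cpath v L) =
  (\sum_(q < L.+1) f (cpath (iter q (@ordS n) v) (L - q)) * g (cpath v q))%R.
Proof.
rewrite /qmul /cpath size_traject; apply: eq_bigr => q _.
have qL : q <= L by rewrite -ltnS.
by rewrite take_traject // drop_traject // /qend map_traject last_traject.
Qed.

Lemma hv_le (i j : 'I_n) l : ho_valid (i, j, l) -> j <= l * n + i.
Proof.
move=> /= /orP[H|H]; first by apply: leq_trans H (leq_addl _ _).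
apply: leq_trans (ltnW (ltn_ord j)) _; apply: leq_trans (leq_addr i _).
by rewrite leq_pmull.
Qed.

Lemma mul_reindex (i j : 'I_n) l (f g : qpath 'I_n 'I_n -> k) :
  ho_valid (i, j, l) ->
  (\sum_(q < (l * n + i - j)%N.+1) f (cpath (iter q (@ordS n) j) (l * n + i - j - q)%N) * g (cpath j q) =
  \sum_(t : 'I_n) \sum_(a < l.+1)
     (if ho_valid (i, t, nat_of_ord a) then f (cpath t (a * n + i - t)%N) else 0) *
     (if ho_valid (t, j, (l - a)%N) then g (cpath j ((l - a) * n + t - j)%N) else 0))%R.
Proof.
move=> Hv; have Hj := hv_le Hv.
set L := l * n + i - j.
have EL : j + L = l * n + i by rewrite subnKC.
have ni := ltn_ord i; have nj := ltn_ord j.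
have n0 : 0 < n by apply: leq_ltn_trans (leq0n i) ni.
have Fq : forall q : 'I_L.+1, let b := (j + q) %/ n in let t := (j + q) %% n in
   [/\ j + q = b * n + t, b <= l, (t <= i) || (0 < l - b), (j <= t) || (0 < b)
     & (l - b) * n + i - t = L - q].
  move=> q b t.
  have qL : q <= L by rewrite -ltnS.
  have E1 : j + q = b * n + t by rewrite /b /t -divn_eq.
  have tn : t < n by rewrite ltn_mod.
  have bl : b <= l.
    have := leq_div2r n (leq_add (leqnn j) qL); rewrite EL.
    by have [-> _] := divmod_lin l ni.
  have Hbn : b * n <= l * n by rewrite leq_mul2r bl orbT.
  clearbody b t L.
  split => //.
  - case: (ltnP b l) => [bl'|lb]; first by rewrite subn_gt0 bl' orbT.
    have eb : b = l by apply/eqP; rewrite eqn_leq bl lb.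
    apply/orP; left.
    move: E1; rewrite eb => E1. lia.
  - case Eb: b => [|b']; last by rewrite orbT.
    by move: E1; rewrite Eb mul0n add0n => <-; rewrite leq_addr.
  - rewrite mulnBl. lia.
rewrite pair_bigA /=.
pose h := fun q : 'I_L.+1 => (iter q (@ordS n) j, (inord (l - (j + q) %/ n) : 'I_l.+1)).
symmetry; rewrite (sum_inj (h := h)).
- apply: eq_bigr => q _ /=.
  have [E1 bl V1 V2 E2] := Fq q.
  have Et : iter q (@ordS n) j = Ordinal (ltn_pmod (j + q) n0).
    by apply: val_inj; rewrite /= val_iter_ordS.
  rewrite Et inordK ?ltnS ?leq_subr //= V1 subKn // V2 E2.
  have -> : (j + q) %/ n * n + (j + q) %% n - j = q by rewrite -divn_eq addKn.
  by [].
- move=> q1 q2 /= [Et Ea].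
  have [E1 bl1 _ _ _] := Fq q1; have [E2 bl2 _ _ _] := Fq q2.
  have Et' := congr1 (@nat_of_ord n) Et; rewrite !val_iter_ordS in Et'.
  have Ea' := congr1 (@nat_of_ord _) Ea; rewrite !inordK ?ltnS ?leq_subr // in Ea'.
  have Eb : (j + q1) %/ n = (j + q2) %/ n.
    by rewrite -(subKn bl1) -(subKn bl2) Ea'.
  apply: val_inj => /=; apply/eqP; rewrite -(eqn_add2l j); apply/eqP.
  by rewrite (divn_eq (j + q1) n) (divn_eq (j + q2) n) Eb Et'.
- move=> [t a] Hn /=.
  case V1: ((t <= i) || (0 < a)); last by rewrite mul0r.
  case V2: ((j <= t) || (0 < l - a)); last by rewrite mulr0.
  exfalso.
  have al : a <= l by rewrite -ltnS.
  have tn := ltn_ord t.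
  have Hjt : j <= (l - a) * n + t.
    move: V2 => /= /orP[H|H]; first by apply: leq_trans H (leq_addl _ _).
    apply: leq_trans (ltnW nj) _; apply: leq_trans (leq_addr t _).
    by rewrite leq_pmull.
  have Ejq : j + ((l - a) * n + t - j) = (l - a) * n + t by rewrite subnKC.
  have qL : (l - a) * n + t - j < L.+1.
    rewrite ltnS /L leq_sub2rE //.
    move: V1 => /= /orP[H|H].
      rewrite mulnBl; have: a * n <= l * n by rewrite leq_mul2r al orbT.
      lia.
    have : n <= a * n by rewrite leq_pmull.
    have: a * n <= l * n by rewrite leq_mul2r al orbT.
    rewrite mulnBl; lia.
  apply: (negP (Hn (Ordinal qL))); rewrite /h /=.
  have [Ed Em] := divmod_lin (l - a) tn.
  apply/eqP; congr (_, _); apply: val_inj => /=.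
    by rewrite val_iter_ordS Ejq Em.
  by rewrite Ejq Ed subKn // inordK // ltnS leq_subr.
Qed.

Lemma Fc_hom : kalg_hom Fc.
Proof.
split.
- move=> a b; apply: supp_eq => -[[i j] l].
  rewrite /Fc sval_mkS (@skaddE _ _ _ _ _ a b) skaddE !sval_mkS cvalid_cpath.
  by case: (ho_valid _).
- move=> a b; apply: supp_eq => -[[i j] l].
  rewrite /Fc sval_mkS (@skmulE _ _ _ _ _ a b) skmulE cvalid_cpath qmul_cpath.
  case Hv: (ho_valid _) => //.
  rewrite (mul_reindex _ _ Hv) /ho_mul.
  by apply: eq_bigr => t _; apply: eq_bigr => c _; rewrite !sval_mkS.
- apply: supp_eq => -[[i j] l].
  rewrite /Fc sval_mkS !skoneE cvalid_cpath.
  case Hv: (ho_valid _) => //.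
  rewrite [X in X = _](_ : _ = if (l * n + i - j == 0) then 1%R else 0%R); last first.
    by rewrite /qone /cpath /=; case: (l * n + i - j).
  rewrite /ho_one; congr (if _ then _ else _).
  rewrite -val_eqE /=; have ni := ltn_ord i; have nj := ltn_ord j; move: Hv => /=.
  case: l => [|l]; rewrite ?mul0n ?add0n ?mulSn /=; lia.
- move=> c a; apply: supp_eq => -[[i j] l].
  rewrite /Fc sval_mkS (@skscaleE _ _ _ _ _ c a) skscaleE !sval_mkS cvalid_cpath.
  by case: (ho_valid _).
Qed.

Lemma part2_factor : kalg_isomorphic (hered_order k n) (cyc_alg k n).
Proof.
exists Gc; split; first by exists Fc; [exact: GcK | exact: FcK].
exact: hom_inv FcK GcK Fc_hom.
Qed.

End Cyc.

Lemma iter_porbit_mul (T : finType) (s : {perm T}) x m :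
  iter (m * #|porbit s x|) s x = x.
Proof. by elim: m => [|m IH] //=; rewrite mulSn iterD IH iter_porbit. Qed.

Lemma iter_porbit_mod (T : finType) (s : {perm T}) x K :
  iter K s x = iter (K %% #|porbit s x|) s x.
Proof.
by rewrite {1}(divn_eq K #|porbit s x|) addnC iterD iter_porbit_mul.
Qed.

Lemma iter_porbit_fix (T : finType) (s : {perm T}) x K :
  (iter K s x == x) = (#|porbit s x| %| K).
Proof.
rewrite iter_porbit_mod /dvdn.
have P0 : 0 < #|porbit s x| by rewrite lt0n card_porbit_neq0.
have rP : K %% #|porbit s x| < #|porbit s x| by rewrite ltn_mod.
move: rP; case: (K %% _) => [|r] rP; first by rewrite /= !eqxx.
apply/negbTE/eqP => E.
have U := uniq_traject_porbit s x.
have E1 := nth_traject s rP x; rewrite E in E1.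
have E0 := nth_traject s P0 x.
have : nth x (traject s x #|porbit s x|) r.+1 == nth x (traject s x #|porbit s x|) 0.
  by rewrite E1 E0.
by rewrite (nth_uniq x _ _ U) ?size_traject.
Qed.

Lemma connect_const (n : nat) (sigma alpha phi : {perm 'I_n}) (T : eqType) (f : 'I_n -> T) :
  [transitive <<[set sigma; alpha; phi]>>, on [set: 'I_n] | 'P] ->
  (forall h, f (sigma h) = f h) -> (forall h, f (alpha h) = f h) ->
  (forall h, f (phi h) = f h) -> forall h h', f h = f h'.
Proof.
move=> Ht Hs Ha Hp.
pose H := [set a : {perm 'I_n} | [forall h, f (a h) == f h]].
have gH : group_set H.
  apply/group_setP; split; first by rewrite inE; apply/forallP => h; rewrite perm1.
  move=> a b; rewrite !inE => /forallP Ha' /forallP Hb'; apply/forallP => h.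
  by rewrite permM (eqP (Hb' _)) (eqP (Ha' _)).
have sub : (<<[set sigma; alpha; phi]>> \subset (Group gH))%g.
  rewrite gen_subG; apply/subsetP => a; rewrite !inE.
  by move=> /orP[/orP[/eqP->|/eqP->]|/eqP->]; apply/forallP => h; apply/eqP.
have HG : forall a, a \in (<<[set sigma; alpha; phi]>>)%g -> forall h, f (a h) = f h.
  move=> a /(subsetP sub); rewrite inE => /forallP Ha' h; exact/eqP.
move=> h h'.
have [a aG ->] := atransP2 Ht (in_setT h) (in_setT h').
by rewrite [RHS](HG a aG).
Qed.

Section Ser.
Variables (k : fieldType) (r : nat).
Local Open Scope nat_scope.

Definition pm (i : 'I_r) c : mono r := [ffun j => if j == i then c else 0].

Lemma pm0 i : pm i 0 = [ffun => 0].
Proof. by apply/ffunP => j; rewrite !ffunE; case: (j == i). Qed.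

Lemma sum_mono_le (mu : mono r) t : mu t <= \sum_j mu j.
Proof. by rewrite (bigD1 t) //= leq_addr. Qed.

Lemma smul_ext (f g g' : mono r -> k) mu : (forall m, g m = g' m) -> smul f g mu = smul f g' mu.
Proof. by move=> E; apply: eq_bigr => X _; rewrite E. Qed.

Lemma smul_pure (f g : mono r -> k) i c :
  smul f g (pm i c) = (\sum_(a < c.+1) f (pm i a) * g (pm i (c - a)))%R.
Proof.
rewrite /smul big_mkcond /=.
set S := (\sum_j pm i c j).
have ES : S = c.
  rewrite /S (bigD1 i) //= big1 ?ffunE ?eqxx ?addn0 // => j /negbTE.
  by rewrite ffunE => ->.
have aS : forall a : 'I_c.+1, a < S.+1 by move=> a; rewrite ES.
pose h := fun a : 'I_c.+1 => [ffun j => if j == i then (inord a : 'I_S.+1) else ord0].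
rewrite (sum_inj (h := h)).
- apply: eq_bigr => a _.
  rewrite ifT; last first.
    apply/forallP => j; rewrite /h !ffunE; case: eqP => _ //=.
    by rewrite inordK // -ltnS.
  congr (f _ * g _)%R; apply/ffunP => j; rewrite !ffunE; case: eqP => //= _;
  by rewrite inordK.
- move=> a1 a2 Eh; have := congr1 (fun X : {ffun 'I_r -> 'I_S.+1} => nat_of_ord (X i)) Eh; rewrite /= !ffunE eqxx.
  by rewrite /= !inordK // => /val_inj.
- move=> X HX; case: ifP => // /forallP HC; exfalso.
  have Xi : X i < c.+1 by have := HC i; rewrite ffunE eqxx.
  apply: (negP (HX (Ordinal Xi))); apply/eqP/ffunP => j; rewrite ffunE.
  case: eqP => [->|/eqP ne]; apply: val_inj => /=; first by rewrite inordK.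
  by have := HC j; rewrite ffunE (negbTE ne) leqn0 => /eqP.
Qed.

Lemma smul_ind (f : mono r -> k) (nu mu : mono r) :
  smul f (fun m => if m == nu then 1%R else 0%R) mu =
  if [forall t, nu t <= mu t] then f [ffun t => mu t - nu t] else 0%R.
Proof.
rewrite /smul big_mkcond /=.
set S := (\sum_j mu j).
have mS : forall t, mu t - nu t < S.+1.
  by move=> t; rewrite ltnS (leq_trans (leq_subr _ _)) // sum_mono_le.
case: ifP => [/forallP Hle|Hle].
- pose X0 := [ffun t => (inord (mu t - nu t) : 'I_S.+1)].
  rewrite (bigD1 X0) //= big1 ?addr0.
  + rewrite ifT; last by apply/forallP => t; rewrite ffunE inordK // leq_subr.
    rewrite ifT ?mulr1; last first.
      by apply/eqP/ffunP => t; rewrite !ffunE inordK // subKn.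
    by congr f; apply/ffunP => t; rewrite !ffunE inordK.
  + move=> X HX; case: ifP => // /forallP HC.
    case: ifP => [/eqP E|]; last by rewrite mulr0.
    exfalso; move/negP: HX; apply; apply/eqP/ffunP => t; rewrite ffunE.
    apply: val_inj; rewrite /= inordK //.
    have := congr1 (fun m : mono r => m t) E; rewrite ffunE => <-.
    by rewrite subKn // HC.
- apply: big1 => X _; case: ifP => // /forallP HC.
  case: ifP => [/eqP E|]; last by rewrite mulr0.
  exfalso; move/negP: Hle; apply; apply/forallP => t.
  by rewrite -E ffunE leq_subr.
Qed.

Definition emono (i : 'I_r) : mono r := [ffun j => nat_of_bool (j == i)].

Lemma zz_val (i j : 'I_r) mu :
  sval (kmul (zvar k i) (zvar k j)) mu =
  if mu == [ffun t => emono i t + emono j t] then 1%R else 0%R.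
Proof.
rewrite skmulE /=.
rewrite (@smul_ext _ _ (fun m => if m == emono j then 1%R else 0%R)); last by [].
rewrite (smul_ind (fun m => if m == [ffun j0 => nat_of_bool (j0 == i)] then 1%R else 0%R)).
case: ifP => [/forallP Hle|Hle].
- congr (if _ then _ else _); apply/eqP/eqP => E.
    apply/ffunP => t; have := congr1 (fun m : mono r => m t) E; rewrite !ffunE => <-.
    by rewrite subnK //; have := Hle t; rewrite ffunE.
  by apply/ffunP => t; rewrite !ffunE E !ffunE addnK.
- case: eqP => // E; exfalso; move/negP: Hle; apply; apply/forallP => t.
  by rewrite E !ffunE leq_addl.
Qed.


Lemma ser_mulE (a b : series_alg k r) mu : sval (kmul a b) mu = smul (sval a) (sval b) mu.
Proof. by []. Qed.

Lemma sval_big (I : finType) (P : pred I) (F : I -> series_alg k r) mu :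
  sval (\big[@kadd _ (series_alg k r)/kzero (series_alg k r)]_(i | P i) F i) mu =
  (\sum_(i | P i) sval (F i) mu)%R.
Proof.
elim/big_rec2: _ => [|i y1 y2 _ <-]; first by rewrite skzeroE.
by rewrite skaddE.
Qed.

Definition e2 (a b : 'I_r) : mono r := [ffun t => emono a t + emono b t].

Lemma e2_pure (a b i : 'I_r) d : a != b -> (pm i d == e2 a b) = false.
Proof.
move=> ab; apply/negbTE/eqP => E.
have Ea := congr1 (fun m : mono r => m a) E; have Eb := congr1 (fun m : mono r => m b) E.
move: Ea Eb; rewrite !ffunE eqxx (eq_sym b a) (negbTE ab) /=.
rewrite eqxx; case: (eqVneq a i) => [Eai|] //; case: (eqVneq b i) => [Ebi|] //.
by move: ab; rewrite Eai Ebi eqxx.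
Qed.

Lemma ideal_iff (i0 : 'I_r) (x : series_alg k r) : in_zz_ideal x <-> (forall i c, sval x (pm i c) = 0%R).
Proof.
split.
- move=> [F ->] i c; rewrite sval_big big1 // => a _.
  rewrite sval_big big1 // => b ab.
  rewrite ser_mulE smul_pure big1 // => d _.
  by rewrite zz_val e2_pure // mulr0.
- move=> PZ.
  pose pick2 := fun mu : mono r =>
    [pick ij : 'I_r * 'I_r | (ij.1 != ij.2) && (0 < mu ij.1) && (0 < mu ij.2)].
  pose addm := fun (nu : mono r) a b => [ffun t => nu t + e2 a b t].
  pose F := fun a b => mkS (fun _ : mono r => true)
     (fun nu => if pick2 (addm nu a b) == Some (a, b) then sval x (addm nu a b) else 0%R).
  exists F; apply: supp_eq => mu; rewrite sval_big.
  rewrite (eq_bigr (fun a => \sum_(b | a != b) (if pick2 mu == Some (a, b) then sval x mu else 0%R))%R); last first.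
    move=> a _; rewrite sval_big; apply: eq_bigr => b ab.
    rewrite ser_mulE (@smul_ext _ _ (fun m => if m == e2 a b then 1%R else 0%R)); last first.
      by move=> m; rewrite zz_val.
    rewrite smul_ind; case: ifP => [/forallP Hle|Hle].
      rewrite sval_mkS /=.
      have -> : addm [ffun t => mu t - e2 a b t] a b = mu.
        by apply/ffunP => t; rewrite !ffunE subnK //; have := Hle t; rewrite !ffunE.
      by [].
    case: eqP => // Ep; exfalso; move/negP: Hle; apply.
    move: Ep; rewrite /pick2; case: pickP => // -[a' b'] /= /andP[/andP[ne pa] pb] [<- <-].
    apply/forallP => t; rewrite !ffunE.
    case: (eqVneq t a') => [->|ta]; first by rewrite (negbTE ne).
    by case: (eqVneq t b') => [->|].
  rewrite /pick2; case: pickP => [[a0 b0] /= /andP[/andP[ne pa] pb] | Hn].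
  + rewrite (bigD1 a0) //= (bigD1 b0) //= eqxx big1 ?addr0; last first.
      move=> b /andP[_ nb]; case: (Some (a0, b0) =P Some (a0, b)) => // -[E].
      by move: nb; rewrite E eqxx.
    rewrite big1 ?addr0 // => a na; apply: big1 => b _.
    by case: (Some (a0, b0) =P Some (a, b)) => // -[Ea _]; move: na; rewrite Ea eqxx.
  + rewrite big1; last by move=> a _; apply: big1 => b _.
    case: (pickP (fun t => 0 < mu t)) => [t pt|Hz].
      have -> : mu = pm t (mu t); last by rewrite PZ.
      apply/ffunP => u; rewrite ffunE; case: eqP => [->|/eqP nu] //.
      have := Hn (t, u); rewrite /= eq_sym nu pt /= => /negbT.
      by rewrite lt0n negbK => /eqP.
    have -> : mu = pm i0 0; last by rewrite PZ.
    apply/ffunP => u; rewrite !ffunE; have := Hz u; rewrite /= lt0n => /negbT.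
    by rewrite negbK => /eqP ->; case: (u == i0).
Qed.

End Ser.

Section Surf.
Variables (k : fieldType) (n : nat) (sigma alpha phi : {perm 'I_n}).
Hypothesis Hcomp : forall h, sigma (alpha (phi h)) = h.
Hypothesis Hinv : forall h, alpha (alpha h) = h.
Hypothesis Hfpf : forall h, alpha h != h.

Definition tau h := alpha (phi h).
Notation E := (@edge_of n alpha).
Notation stgt := (fun h => @edge_of n alpha (phi h)).
Notation svalid := (qvalid (fun h => @edge_of n alpha h) (fun h => @edge_of n alpha (phi h))
   (fun a b => b == phi a)).
Notation SA := (surface_completion k alpha phi).

Definition wpath g L : qpath (sq0 alpha) 'I_n := (E g, traject tau g L).

Lemma sigma_tau h : sigma (tau h) = h. Proof. exact: Hcomp. Qed.
Lemma tau_sigma h : tau (sigma h) = h.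
Proof. by apply: (@perm_inj _ sigma); rewrite sigma_tau. Qed.

Lemma edge_alpha h : E (alpha h) = E h.
Proof. by apply: val_inj => /=; rewrite Hinv setUC. Qed.

Lemma qstep_tau a b : ((E (phi a) == E b) && ~~ (b == phi a)) = (b == tau a).
Proof.
apply/idP/eqP.
- move=> /andP[/eqP He Hr].
  have : b \in val (E (phi a)) by rewrite He /= set21.
  rewrite /= !inE => /orP[/eqP Eb|/eqP Eb]; last by [].
  by rewrite Eb eqxx in Hr.
- by move=> ->; rewrite /tau edge_alpha eqxx /= Hfpf.
Qed.

Lemma svalid_wpath g L : svalid (wpath g L).
Proof.
case: L => //= L; rewrite eqxx /=.
have -> : path (qstep (fun h => E h) (fun h => E (phi h)) (fun a b => b == phi a)) g
   (traject tau (tau g) L) = fpath tau g (traject tau (tau g) L).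
  by apply: eq_path => a b; rewrite /qstep /= qstep_tau eq_sym.
exact: fpath_traject.
Qed.

Lemma svalidE v g s : svalid (v, g :: s) -> (v, g :: s) = wpath g (size s).+1.
Proof.
move=> /= /andP[/eqP <- Hp].
have Hp' : fpath tau g s.
  by move: Hp; apply: sub_path => x y; rewrite /qstep /= qstep_tau eq_sym.
by rewrite /wpath /= {1}(fpathE Hp').
Qed.

Lemma qend_wpath g L : qend (fun h => E (phi h)) (E g) (traject tau g L) = E (iter L tau g).
Proof.
case: L => [|L] //; rewrite /qend trajectS /=.
by rewrite (last_map (fun h => E (phi h))) last_traject /tau edge_alpha.
Qed.

Lemma qmul_wpath (f f' : qpath (sq0 alpha) 'I_n -> k) x L :
  qmul (fun h => E (phi h)) f f' (wpath x L) =
  (\sum_(q < L.+1) f (wpath (iter q tau x) (L - q)) * f' (wpath x q))%R.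
Proof.
rewrite /qmul /wpath size_traject; apply: eq_bigr => q _.
have qL : (q <= L)%N by rewrite -ltnS.
by rewrite take_traject // drop_traject // qend_wpath.
Qed.

Definition pl g := #|porbit sigma g|.
Lemma pl_gt0 g : (0 < pl g)%N.
Proof. by rewrite lt0n card_porbit_neq0. Qed.

Lemma porbit_tau g : porbit sigma (tau g) = porbit sigma g.
Proof.
apply/eqP; rewrite eq_porbit_mem porbit_sym.
by have := mem_porbit sigma 1 (tau g); rewrite expg1 sigma_tau.
Qed.

Lemma porbit_iter_tau q g : porbit sigma (iter q tau g) = porbit sigma g.
Proof. by elim: q => //= q IH; rewrite porbit_tau. Qed.

Lemma porbit_sigma g : porbit sigma (sigma g) = porbit sigma g.
Proof. by have := porbit_perm sigma 1 g; rewrite expg1. Qed.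

Lemma por_in g : porbit sigma g \in porbits sigma.
Proof. exact: imset_f. Qed.

Definition idx g : 'I_(ncyc sigma) := enum_rank_in (por_in g) (porbit sigma g).

Lemma idx_val g : enum_val (idx g) = porbit sigma g.
Proof. exact: (enum_rankK_in (por_in g) (por_in g)). Qed.

Lemma idx_eq g g' : porbit sigma g = porbit sigma g' -> idx g = idx g'.
Proof. by move=> E0; apply: enum_val_inj; rewrite !idx_val. Qed.

Lemma cyc_len_idx g : cyc_len (idx g) = pl g.
Proof. by rewrite /cyc_len idx_val. Qed.

Lemma idx_surj i : exists g, idx g = i /\ porbit sigma g = enum_val i.
Proof.
have := enum_valP i; move=> /imsetP[g _ Eg]; exists g; split => //.
by apply: enum_val_inj; rewrite idx_val.
Qed.

Lemma iter_sig_tau K g : iter K sigma (iter K tau g) = g.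
Proof. by elim: K g => [//|K IH g]; rewrite iterSr iterS sigma_tau IH. Qed.

Lemma iter_tau_sig K g : iter K tau (iter K sigma g) = g.
Proof. by elim: K g => [//|K IH g]; rewrite iterSr iterS tau_sigma IH. Qed.

Lemma iter_tau_fix g K : (iter K tau g == g) = (pl g %| K)%N.
Proof.
rewrite /pl -iter_porbit_fix; apply/eqP/eqP => E0.
  by rewrite -{2}(iter_sig_tau K g) E0.
by rewrite -{2}(iter_tau_sig K g) E0.
Qed.

Lemma iter_tau_sigma K g : iter K tau (sigma g) = sigma (iter K tau g).
Proof. by elim: K => //= K ->; rewrite tau_sigma sigma_tau. Qed.

Notation pmono := (@pm (ncyc sigma)).
Notation pmono0 := (@pm0 (ncyc sigma)).

Definition Cf (f : mono (ncyc sigma) -> k) g L :=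
  if (pl g %| L)%N then f (pmono (idx g) (L %/ pl g)) else 0%R.

Definition psiF (f : mono (ncyc sigma) -> k) (x : qpath (sq0 alpha) 'I_n) :=
  let: (v, s) := x in if s is g :: _ then Cf f g (size s) else f [ffun => 0%N].

Definition psi (x : series_alg k (ncyc sigma)) : SA := mkS svalid (psiF (sval x)).

Lemma psiF_wpath f g L : psiF f (wpath g L) = Cf f g L.
Proof.
case: L => [|L]; first by rewrite /= /Cf dvdn0 div0n pmono0.
by rewrite /= size_traject.
Qed.

Lemma Cf_tau f g L q : Cf f (iter q tau g) L = Cf f g L.
Proof.
by rewrite /Cf /pl porbit_iter_tau (idx_eq (porbit_iter_tau q g)).
Qed.

Lemma sval_psi x g L : sval (psi x) (wpath g L) = Cf (sval x) g L.
Proof. by rewrite /psi sval_mkS svalid_wpath psiF_wpath. Qed.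


Lemma sq0_edge (v : sq0 alpha) : exists h, v = E h.
Proof.
case: v => e He; have := He => /imsetP[h _ Eh]; exists h.
by apply: val_inj => /=.
Qed.

Lemma valid_cases p : svalid p -> exists g L, p = wpath g L.
Proof.
case: p => v [|g s] Hv.
  by have [h ->] := sq0_edge v; exists h, 0.
by exists g, (size s).+1; exact: svalidE.
Qed.

Lemma sval_psi_gen x p : sval (psi x) p = if svalid p then psiF (sval x) p else 0%R.
Proof. by []. Qed.

Lemma Cf_mul (f1 f2 : mono (ncyc sigma) -> k) g L :
  Cf (smul f1 f2) g L = (\sum_(q < L.+1) Cf f1 g (L - q) * Cf f2 g q)%R.
Proof.
rewrite /Cf; set p := pl g; have p0 : (0 < p)%N := pl_gt0 g.
case: ifP => dL; last first.
  apply/esym/big1 => q _; case: ifP => d1; case: ifP => d2; rewrite ?mul0r ?mulr0 //.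
  have qL : (q <= L)%N by rewrite -ltnS.
  by have := dvdn_add d1 d2; rewrite subnK // dL.
set c := (L %/ p)%N; have EL : L = (c * p)%N by rewrite divnK.
rewrite smul_pure.
have hb : forall a : 'I_c.+1, ((c - a) * p < L.+1)%N.
  move=> a; rewrite ltnS EL leq_mul2r leq_subr orbT //.
pose h := fun a : 'I_c.+1 => (inord ((c - a) * p) : 'I_L.+1).
symmetry; rewrite (sum_inj (h := h)).
- apply: eq_bigr => a _; rewrite /h inordK //.
  have al : (a <= c)%N by rewrite -ltnS.
  have -> : (L - (c - a) * p = a * p)%N by rewrite EL -mulnBl subKn.
  by rewrite !dvdn_mull ?dvdnn // !mulnK.
- move=> a1 a2 Eh; have := congr1 (@nat_of_ord _) Eh; rewrite /h !inordK //.
  move/eqP; rewrite eqn_pmul2r // => /eqP E1.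
  have a1c : (a1 <= c)%N by rewrite -ltnS.
  have a2c : (a2 <= c)%N by rewrite -ltnS.
  by apply: val_inj => /=; rewrite -(subKn a1c) E1 subKn.
- move=> q Hq; case: ifP => d1; case: ifP => d2; rewrite ?mul0r ?mulr0 //.
  exfalso; have qL : (q <= L)%N by rewrite -ltnS.
  set b := (q %/ p)%N; have Eq : q = (b * p)%N :> nat by rewrite divnK.
  have bc : (b <= c)%N by rewrite -(leq_pmul2r p0) -Eq -EL.
  have bc' : (c - b < c.+1)%N by rewrite ltnS leq_subr.
  apply: (negP (Hq (Ordinal bc'))); apply/eqP/val_inj; rewrite /h /= inordK subKn //.
  by rewrite -Eq.
Qed.


Lemma psi_hom : kalg_hom psi.
Proof.
split.
- move=> x y; apply: supp_eq => p.
  rewrite sval_psi_gen skaddE !sval_psi_gen.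
  case Hv: (svalid p) => //; have [g [L ->]] := valid_cases Hv.
  rewrite !psiF_wpath /Cf; case: ifP => _ //; by rewrite addr0.
- move=> x y; apply: supp_eq => p.
  rewrite sval_psi_gen skmulE.
  case Hv: (svalid p) => //; have [g [L ->]] := valid_cases Hv.
  rewrite psiF_wpath qmul_wpath Cf_mul; apply: eq_bigr => q _.
  by rewrite !sval_psi Cf_tau.
- apply: supp_eq => p.
  rewrite sval_psi_gen skoneE.
  case Hv: (svalid p) => //; have [g [L ->]] := valid_cases Hv.
  rewrite psiF_wpath /Cf /qone /wpath /=.
  case: L => [|L] /=; first by rewrite dvdn0 div0n pmono0 /trunc /= /sone eqxx.
  case: ifP => // d; rewrite /trunc /= /sone; case: eqP => // E0.
  have := congr1 (fun m : mono _ => m (idx g)) E0; rewrite !ffunE eqxx => Q.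
  by have := divnK d; rewrite Q.
- move=> c x; apply: supp_eq => p.
  rewrite sval_psi_gen skscaleE !sval_psi_gen.
  case Hv: (svalid p) => //; have [g [L ->]] := valid_cases Hv.
  rewrite !psiF_wpath /Cf; case: ifP => _ //; by rewrite mulr0.
Qed.


Lemma psi_central x : central (psi x).
Proof.
move=> y; apply: supp_eq => p; rewrite !skmulE.
case Hv: (svalid p) => //; have [g [L ->]] := valid_cases Hv.
rewrite !qmul_wpath [RHS](reindex_inj rev_ord_inj).
apply: eq_bigr => q _; rewrite !sval_psi Cf_tau /= subSS.
have qL : (q <= L)%N by rewrite -ltnS.
rewrite subKn // /Cf; case: ifP => d; last by rewrite mul0r mulr0.
by rewrite mulrC; move: d; rewrite -iter_tau_fix => /eqP ->.
Qed.

Definition arr h : SA := mkS svalid (fun p => if p == wpath h 1 then 1%R else 0%R).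

Lemma arr_val h g L : sval (arr h) (wpath g L) = if (L == 1%N) && (g == h) then 1%R else 0%R.
Proof.
rewrite /arr sval_mkS svalid_wpath; congr (if _ then _ else _).
rewrite /wpath xpair_eqE; case: L => [|[|L]] //=; rewrite ?andbF //.
  apply/idP/idP => [/andP[_ /eqP [->]] //|/eqP ->]; by rewrite ?eqxx.
by rewrite eqseq_cons /= !andbF.
Qed.

Variable z : SA.
Hypothesis Hz : central z.

Lemma central_step h K :
  sval z (wpath (tau h) K) = if iter K tau h == h then sval z (wpath h K) else 0%R.
Proof.
have := congr1 (fun w : SA => sval w (wpath h K.+1)) (Hz (arr h)).
rewrite (@skmulE _ _ _ _ _ z (arr h)) (@skmulE _ _ _ _ _ (arr h) z) svalid_wpath !qmul_wpath.
have L1 : (\sum_(q < K.+2) sval z (wpath (iter q tau h) (K.+1 - q)) * sval (arr h) (wpath h q)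
   = sval z (wpath (tau h) K))%R.
  rewrite big_ord_recl big_ord_recl big1; last first.
    by move=> q _; rewrite arr_val /= mulr0.
  by rewrite !arr_val /= eqxx mulr0 mulr1 add0r addr0 /bump /= subSS subn0.
have R1 : (\sum_(q < K.+2) sval (arr h) (wpath (iter q tau h) (K.+1 - q)) * sval z (wpath h q)
   = if iter K tau h == h then sval z (wpath h K) else 0)%R.
  rewrite big_ord_recr big_ord_recr big1; last first.
    move=> q _; rewrite arr_val /=.
    have qK : (q < K)%N by [].
    rewrite (_ : (K.+1 - q == 1)%N = false) ?mul0r //; apply/eqP; lia.
  rewrite !arr_val subSnn subnn /= mul0r addr0 add0r.
  by case: eqP => _; rewrite ?mul1r ?mul0r.
by rewrite L1 R1.
Qed.


Lemma central_zero g K :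
  sval z (wpath g K) = if (pl g %| K)%N then sval z (wpath (sigma g) K) else 0%R.
Proof.
have := central_step (sigma g) K; rewrite tau_sigma iter_tau_sigma => ->.
by rewrite (inj_eq (@perm_inj _ sigma)) iter_tau_fix.
Qed.

Lemma central_inv g K : (pl g %| K)%N -> sval z (wpath (sigma g) K) = sval z (wpath g K).
Proof. by move=> d; rewrite [RHS]central_zero d. Qed.

Lemma central_orbit g g' K : g' \in porbit sigma g -> (pl g %| K)%N ->
  sval z (wpath g' K) = sval z (wpath g K).
Proof.
move=> /porbitP[i ->] d; rewrite permX.
elim: i => //= i IH; rewrite central_inv ?IH //.
have -> : pl (iter i sigma g) = pl g.
  by rewrite /pl; elim: (i) => //= j IHj; rewrite porbit_sigma.
by [].
Qed.

Lemma central_triv (Ht : [transitive <<[set sigma; alpha; phi]>>, on [set: 'I_n] | 'P])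
  h h' : sval z (wpath h 0) = sval z (wpath h' 0).
Proof.
apply: (connect_const (f := fun h => sval z (wpath h 0)) Ht) => g.
- by have := central_step (sigma g) 0; rewrite tau_sigma /= eqxx.
- by rewrite /wpath edge_alpha.
- have := central_step g 0; rewrite /= eqxx /wpath /= => <-.
  by rewrite -[in LHS]edge_alpha.
Qed.


Lemma central_image (Ht : [transitive <<[set sigma; alpha; phi]>>, on [set: 'I_n] | 'P])
  (h0 : 'I_n) : exists x, psi x = z.
Proof.
pose rep := fun i : 'I_(ncyc sigma) => [pick g | porbit sigma g == enum_val (A := porbits sigma) i].
pose xf := fun mu : mono (ncyc sigma) => if mu == [ffun => 0%N] then sval z (wpath h0 0) else
   (\sum_(i : 'I_(ncyc sigma)) (if mu == pmono i (mu i) then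
        (if rep i is Some g then sval z (wpath g (mu i * pl g)) else 0) else 0))%R.
exists (mkS (fun _ => true) xf).
apply: supp_eq => p; rewrite sval_psi_gen.
case Hv: (svalid p); last by rewrite (supp_out z) ?Hv.
have [g [L E0]] := valid_cases Hv; rewrite E0 psiF_wpath /Cf.
case: ifP => d; last by rewrite central_zero d.
rewrite sval_mkS /xf /=.
case: L E0 d => [|L] E0 d.
  by rewrite div0n pmono0 eqxx; apply: central_triv.
set c := (L.+1 %/ pl g)%N.
have Ec : (c * pl g = L.+1)%N by rewrite divnK.
have c0 : (0 < c)%N by move: Ec; case: (c).
have nz : forall i, (pmono i c == [ffun => 0%N]) = false.
  move=> i; apply/negbTE/eqP => E1; have := congr1 (fun m : mono _ => m i) E1.
  by rewrite !ffunE eqxx => E2; move: c0; rewrite E2.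
rewrite nz (bigD1 (idx g)) //= big1 ?addr0.
- rewrite ffunE !eqxx /rep; case: pickP => [g' /eqP Eg'|Hn]; last first.
    by have := Hn g; rewrite idx_val eqxx.
  have pg : pl g' = pl g by rewrite /pl Eg' idx_val.
  have g'in : g' \in porbit sigma g by rewrite -(idx_val g) -Eg' porbit_id.
  by rewrite pg Ec (central_orbit g'in d).
- by move=> i ne; rewrite ffunE (negbTE ne) pmono0 nz.
Qed.

Lemma psi_ker x : psi x = kzero SA <-> (forall i c, sval x (pmono i c) = 0%R).
Proof.
split.
- move=> H i c; have [g [Eg _]] := idx_surj i.
  have := congr1 (fun w : SA => sval w (wpath g (c * pl g))) H.
  rewrite sval_psi skzeroE /Cf dvdn_mull ?dvdnn // mulnK ?pl_gt0 //.
  by rewrite Eg.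
- move=> H; apply: supp_eq => p; rewrite sval_psi_gen skzeroE.
  case Hv: (svalid p) => //; have [g [L ->]] := valid_cases Hv.
  by rewrite psiF_wpath /Cf; case: ifP.
Qed.

End Surf.

Theorem mainTheorem2 (k : fieldType) (m : nat)
    (sigma alpha phi : {perm 'I_(2 * m)})
    (Htrans : [transitive <<[set sigma; alpha; phi]>>, on [set: 'I_(2 * m)] | 'P])
    (Hcomp : forall h, sigma (alpha (phi h)) = h)
    (Hinv : forall h, alpha (alpha h) = h)
    (Hfpf : forall h, alpha h != h) :
  (exists psi : series_alg k (ncyc sigma) -> surface_completion k alpha phi,
      [/\ kalg_hom psi,
          forall y, central y <-> exists x, psi x = y &
          forall x, psi x = kzero _ <-> in_zz_ideal x])
  /\ kalg_isomorphic (normalization k sigma)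
       (prod_kalg (fun i : 'I_(ncyc sigma) => cyc_alg k (cyc_len i))).
Proof.
have [h0 _] : exists h0 : 'I_(2 * m), True.
  by move: Htrans => /imsetP[x _ _]; exists x.
split.
- exists (@psi k _ sigma alpha phi); split.
  + exact: psi_hom.
  + move=> y; split => [Hy|[x <-]]; last exact: psi_central.
    exact: (central_image Hcomp Hinv Hfpf Hy Htrans h0).
  + move=> x; rewrite (ideal_iff (idx sigma h0)); exact: psi_ker.
- apply: (@prod_iso k _ _ _ (fun i => @Gc k (cyc_len i)) (fun i => @Fc k (cyc_len i))) => i.
  + exact: GcK.
  + exact: FcK.
  + exact: hom_inv (@FcK k _) (@GcK k _) (@Fc_hom k _).
Qed.
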